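(* Let $X$ be a finite set and let $S: X\times X\to X\times X$, $S(x,y)=(g_x(y),f_y(x))$, be a non-degenerate symmetric set-theoretical solution of the quantum Yang–Baxter equation which is not the trivial solution. Let $G(X,S)=\langle X \mid xy=g_x(y)f_y(x),\ x,y\in X\rangle$ be its structure group. Then $G(X,S)$ is not bi-orderable. Furthermore, $G(X,S)$ has generalized torsion elements.
   Context: A set-theoretical solution is a pair $(X,S)$ with $S:X\times X\to X\times X$ a bijection written $S(x,y)=(g_x(y),f_y(x))$ for functions $f_x,g_x:X\to X$. It is non-degenerate if all $f_x,g_x$ are bijections; involutive if $S\circ S=\mathrm{Id}$; braided if $S^{12}S^{23}S^{12}=S^{23}S^{12}S^{23}$ on $X^3$ (where $S^{i,i+1}$ acts on the $i$-th and $(i+1)$-th components); symmetric if involutive and braided. The solution is trivial if $f_x=g_x=\mathrm{Id}_X$ for all $x\in X$. A group is bi-orderable if it admits a strict total order invariant under both left and right multiplication. An element $g\neq 1$ of a group $G$ is a generalized torsion element if there exist $h_1,\dots,h_n\in G$ with $\prod_{i=1}^n h_igh_i^{-1}=1$. *)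

(* Defs.v *)
From mathcomp Require Import all_boot.
Set Implicit Arguments. Unset Strict Implicit. Unset Printing Implicit Defensive.

Record Grp := {
  gcar :> Type;
  gmul : gcar -> gcar -> gcar;
  gone : gcar;
  ginv : gcar -> gcar;
  gmulA : forall a b c, gmul a (gmul b c) = gmul (gmul a b) c;
  gmul1l : forall a, gmul gone a = a;
  gmul1r : forall a, gmul a gone = a;
  gmulVl : forall a, gmul (ginv a) a = gone;
  gmulVr : forall a, gmul a (ginv a) = gone
}.

Definition is_hom (G H : Grp) (phi : G -> H) : Prop :=
  forall a b, phi (gmul a b) = gmul (phi a) (phi b).

Section Solutions.
Variable X : finType.
Variables f g : X -> X -> X.  (* f x = f_x, g x = g_x *)

Definition solS (p : X * X) : X * X := (g p.1 p.2, f p.2 p.1).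

Definition S12 (t : X * X * X) : X * X * X :=
  let '(x, y, z) := t in let '(a, b) := solS (x, y) in (a, b, z).
Definition S23 (t : X * X * X) : X * X * X :=
  let '(x, y, z) := t in let '(b, c) := solS (y, z) in (x, b, c).

Definition sol_bijective : Prop := bijective solS.
Definition non_degenerate : Prop :=
  forall x, bijective (f x) /\ bijective (g x).
Definition involutive_sol : Prop := forall p, solS (solS p) = p.
Definition braided : Prop :=
  forall t, S12 (S23 (S12 t)) = S23 (S12 (S23 t)).
Definition symmetric_sol : Prop := involutive_sol /\ braided.
Definition trivial_sol : Prop := forall x y, f x y = y /\ g x y = y.

Definition satisfies_rel (H : Grp) (j : X -> H) : Prop :=
  forall x y, gmul (j x) (j y) = gmul (j (g x y)) (j (f y x)).

(** (G, iota) is the structure group  <X | xy = g_x(y) f_y(x)>,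
    characterized by the universal property of the presentation. *)
Definition is_structure_group (G : Grp) (iota : X -> G) : Prop :=
  satisfies_rel iota /\
  forall (H : Grp) (j : X -> H), satisfies_rel j ->
    (exists phi : G -> H, is_hom phi /\ forall x, phi (iota x) = j x) /\
    (forall phi psi : G -> H, is_hom phi -> is_hom psi ->
       (forall x, phi (iota x) = psi (iota x)) -> forall a, phi a = psi a).
End Solutions.

Definition bi_orderable (G : Grp) : Prop :=
  exists lt : G -> G -> Prop,
    (forall a, ~ lt a a) /\
    (forall a b c, lt a b -> lt b c -> lt a c) /\
    (forall a b, a <> b -> lt a b \/ lt b a) /\
    (forall a b c, lt a b -> lt (gmul c a) (gmul c b)) /\
    (forall a b c, lt a b -> lt (gmul a c) (gmul b c)).

Definition conj_prod (G : Grp) (x : G) (hs : seq G) : G :=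
  foldr (fun h acc => gmul (gmul (gmul h x) (ginv h)) acc) (gone G) hs.

Definition generalized_torsion (G : Grp) (x : G) : Prop :=
  x <> gone G /\ exists hs : seq G, hs <> [::] /\ conj_prod x hs = gone G.

(* Main.v *)
Require Import Defs.
From mathcomp Require Import all_boot all_fingroup all_algebra zify.
Set Implicit Arguments. Unset Strict Implicit. Unset Printing Implicit Defensive.

Import GRing.Theory.

Section GrpLemmas.
Variable G : Grp.
Implicit Types a b c : G.
Local Notation "a ** b" := (gmul a b) (at level 40, left associativity).

Lemma mulKV a b : a ** ginv b ** b = a.
Proof. by rewrite -gmulA gmulVl gmul1r. Qed.
Lemma mulKV' a b : a ** b ** ginv b = a.
Proof. by rewrite -gmulA gmulVr gmul1r. Qed.
Lemma inv_uniq a b : a ** b = gone G -> ginv a = b.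
Proof. by move=> H; rewrite -[b]gmul1l -(gmulVl a) -gmulA H gmul1r. Qed.
Lemma invM a b : ginv (a ** b) = ginv b ** ginv a.
Proof. apply: inv_uniq. by rewrite -gmulA (gmulA b) gmulVr gmul1l gmulVr. Qed.
Lemma invK a : ginv (ginv a) = a.
Proof. by apply: inv_uniq; rewrite gmulVl. Qed.
Lemma mul_id a : a ** a = a -> a = gone G.
Proof. by move=> H; rewrite -(mulKV' a a) H gmulVr. Qed.
Lemma mulI a b c : a ** b = a ** c -> b = c.
Proof. by move=> H; rewrite -(gmul1l b) -(gmulVl a) -gmulA H gmulA gmulVl gmul1l. Qed.
End GrpLemmas.

Lemma hom1 (G H : Grp) (phi : G -> H) : is_hom phi -> phi (gone G) = gone H.
Proof. move=> Hp. apply: mul_id. by rewrite -Hp gmul1l. Qed.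

Section Semi.
Variable X : finType.
Definition sdT := ({ffun X -> int} * {perm X})%type.
Definition vact (r : {perm X}) (a : {ffun X -> int}) : {ffun X -> int} :=
  [ffun z => a ((r^-1)%g z)].
Definition sdmul (p q : sdT) : sdT :=
  ([ffun z => (p.1 z + vact p.2 q.1 z)%R], (q.2 * p.2)%g).
Definition sdone : sdT := ([ffun _ => 0%R], 1%g).
Definition sdinv (p : sdT) : sdT :=
  ([ffun z => (- vact (p.2^-1)%g p.1 z)%R], (p.2^-1)%g).

Lemma vactM r s a : vact r (vact s a) = vact (s * r)%g a.
Proof. by apply/ffunP=> z; rewrite !ffunE invMg permM. Qed.

Lemma sdmulA a b c : sdmul a (sdmul b c) = sdmul (sdmul a b) c.
Proof.
case: a b c => [a1 a2] [b1 b2] [c1 c2]; rewrite /sdmul /=; congr pair; last by rewrite mulgA.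
apply/ffunP=> z; rewrite !ffunE /= addrA; congr (_ + _)%R.
by rewrite invMg permM.
Qed.
Lemma sdmul1l a : sdmul sdone a = a.
Proof.
case: a => a1 a2; rewrite /sdmul /=; congr pair; last by rewrite mulg1.
by apply/ffunP=> z; rewrite !ffunE invg1 perm1 add0r.
Qed.
Lemma sdmul1r a : sdmul a sdone = a.
Proof.
case: a => a1 a2; rewrite /sdmul /=; congr pair; last by rewrite mul1g.
by apply/ffunP=> z; rewrite !ffunE addr0.
Qed.
Lemma sdmulVl a : sdmul (sdinv a) a = sdone.
Proof.
case: a => a1 a2; rewrite /sdmul /=; congr pair; last by rewrite mulgV.
by apply/ffunP=> z; rewrite !ffunE addNr.
Qed.
Lemma sdmulVr a : sdmul a (sdinv a) = sdone.
Proof.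
case: a => a1 a2; rewrite /sdmul /=; congr pair; last by rewrite mulVg.
by apply/ffunP=> z; rewrite !ffunE invgK -permM mulVg perm1 subrr.
Qed.

Definition SD : Grp := Build_Grp sdmulA sdmul1l sdmul1r sdmulVl sdmulVr.
End Semi.

Import GRing.Theory.

Section Main.
Variable X : finType.
Variables f g : X -> X -> X.
Hypothesis Hginj : forall x, injective (g x).
Hypothesis Hinv : involutive_sol f g.
Hypothesis Hbr : braided f g.

Lemma invol1 x y : g (g x y) (f y x) = x.
Proof. by move: (Hinv (x, y)) => /(congr1 fst). Qed.

Lemma braid1 x y z : g x (g y z) = g (g x y) (g (f y x) z).
Proof. by move: (Hbr (x, y, z)); rewrite /S12 /S23 /solS /= => H; move: (congr1 (fun t => t.1.1) H). Qed.

Definition sg x : {perm X} := perm (@Hginj x).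
Lemma sgE x y : sg x y = g x y.
Proof. by rewrite permE. Qed.

Fixpoint sw (w : seq X) : {perm X} := if w is x :: w' then (sw w' * sg x)%g else 1%g.
Fixpoint vv (w : seq X) : X -> nat :=
  if w is x :: w' then fun z => (z == x) + vv w' ((sg x)^-1%g z) else fun _ => 0.

Lemma sw_cat w1 w2 : sw (w1 ++ w2) = (sw w2 * sw w1)%g.
Proof. by elim: w1 => [|x w1 IH] /=; rewrite ?mulg1 // IH mulgA. Qed.

Lemma vv_cat w1 w2 z : vv (w1 ++ w2) z = vv w1 z + vv w2 ((sw w1)^-1%g z).
Proof.
elim: w1 z => [|x w1 IH] z /=; first by rewrite invg1 perm1.
by rewrite IH addnA invMg permM.
Qed.

Lemma inv_eq (s : {perm X}) z y : ((s^-1)%g z == y) = (z == s y).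
Proof. by rewrite -(inj_eq (@perm_inj _ s)) permKV. Qed.

Lemma braid_perm x y : (sg (f y x) * sg (g x y))%g = (sg y * sg x)%g.
Proof. by apply/permP => t; rewrite !permM !sgE (braid1 x y t). Qed.

Lemma vv_rel x y w z : vv [:: x, y & w] z = vv [:: g x y, f y x & w] z.
Proof.
rewrite /= !inv_eq !sgE invol1 addnA [(z == x) + _]addnC -addnA; congr (_ + (_ + _)).
have := congr1 (fun s : {perm X} => (s^-1)%g z) (braid_perm x y).
by rewrite /= !invMg !permM => ->.
Qed.

Definition prodw (G : Grp) (iota : X -> G) (w : seq X) : G :=
  foldr (fun x acc => gmul (iota x) acc) (gone G) w.

Lemma prodw_cat (G : Grp) (iota : X -> G) w1 w2 :
  prodw iota (w1 ++ w2) = gmul (prodw iota w1) (prodw iota w2).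
Proof. by elim: w1 => [|x w1 IH] /=; rewrite ?gmul1l // -gmulA -IH. Qed.

Lemma vv_ind_div w z : 0 < vv w z ->
  exists w', size w' = (size w).-1 /\ (forall t, vv (z :: w') t = vv w t) /\
     forall (G : Grp) (iota : X -> G), satisfies_rel f g iota ->
       prodw iota (z :: w') = prodw iota w.
Proof.
elim: w z => [|x w1 IH] z //=.
case: (eqVneq z x) => [->|Hzx] Hpos.
  by exists w1; split=> //; split.
rewrite add0n in Hpos.
have [w2 [Hs [Hv Hp]]] := IH _ Hpos.
set z' := ((sg x)^-1)%g z in Hs Hv Hp.
have Hz : g x z' = z by rewrite -sgE permKV.
exists (f z' x :: w2); split; first by rewrite /= Hs; case: (w1) Hpos => //= *.
split.
  move=> t; rewrite -[LHS]/(vv (z :: f z' x :: w2) t) -[RHS]/(vv (x :: w1) t) -Hz -vv_rel; by rewrite /= -Hv.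
move=> G iota Hrel /=.
rewrite -Hz gmulA -Hrel -gmulA.
by move: (Hp G iota Hrel) => /= ->.
Qed.


Lemma vv_eq_prod n : forall w w', size w = n -> size w' = n ->
  (forall t, vv w t = vv w' t) ->
  forall (G : Grp) (iota : X -> G), satisfies_rel f g iota ->
  prodw iota w = prodw iota w'.
Proof.
elim: n => [|n IH] [|x w1] [|y w1'] //= [Hs] [Hs'] Hv G iota Hrel.
have Hpos : 0 < vv (x :: w1) y by rewrite /= Hv eqxx.
have [w'' [Hs'' [Hv'' Hp'']]] := vv_ind_div Hpos.
change (prodw iota (x :: w1) = prodw iota (y :: w1')).
rewrite -(Hp'' G iota Hrel) /=; congr gmul.
apply: (IH w'' w1') => //; first by rewrite Hs'' /= Hs.
move=> s; move: (Hv'' (sg y s)); rewrite /= Hv !permK => /addnI.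
by [].
Qed.

Definition ev (x : X) : {ffun X -> int} := [ffun z => Posz (z == x)].
Definition jj (x : X) : SD X := (ev x, sg x).

Lemma jj_rel : satisfies_rel f g (jj : X -> SD X).
Proof.
move=> x y; rewrite /jj /= /sdmul /=; congr pair; last by rewrite braid_perm.
apply/ffunP=> z; rewrite !ffunE /= !inv_eq !sgE invol1 addrC.
by [].
Qed.

Lemma phi_prodw (G : Grp) (iota : X -> G) (phi : G -> SD X) :
  is_hom phi -> (forall x, phi (iota x) = jj x) ->
  forall w, phi (prodw iota w) = ([ffun z => Posz (vv w z)], sw w).
Proof.
move=> Hh Hj; elim=> [|x w IH] /=.
  rewrite (hom1 Hh); congr pair; by apply/ffunP=> z; rewrite ffunE.
rewrite Hh Hj IH /= /sdmul /=; congr pair.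
by apply/ffunP=> z; rewrite !ffunE PoszD.
Qed.

Fixpoint pw (y : X) (k : nat) : seq X :=
  if k is k'.+1 then pw y k' ++ [:: ((sw (pw y k'))^-1)%g y] else [::].

Lemma size_pw y k : size (pw y k) = k.
Proof. by elim: k => //= k IH; rewrite size_cat IH addn1. Qed.

Lemma vv_pw y k t : vv (pw y k) t = k * (t == y).
Proof.
elim: k => //= k IH; rewrite vv_cat IH /= inv_eq permKV addn0 mulSn addnC.
by [].
Qed.

Lemma sw_fix y : (forall x, sg x y = y) -> forall w, sw w y = y.
Proof. by move=> H; elim=> [|x w IH] /=; rewrite ?perm1 // permM IH H. Qed.

Lemma sw_nseq x k : sw (nseq k x) = (sg x ^+ k)%g.
Proof. by elim: k => [|k IH] //=; rewrite IH expgSr. Qed.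

Lemma nseqSr (x : X) k : nseq k.+1 x = nseq k x ++ [:: x].
Proof. by elim: k => //= k <-. Qed.

Fixpoint hl (G : Grp) (iota : X -> G) (x1 : X) (k n : nat) : seq G :=
  if n is n'.+1 then prodw iota (nseq k x1) :: hl iota x1 k.+1 n' else [::].

Lemma conj_prod_cons (G : Grp) (c h : G) hs :
  conj_prod c (h :: hs) = gmul (gmul (gmul h c) (ginv h)) (conj_prod c hs).
Proof. by []. Qed.

Lemma torsion_exists : ~ trivial_sol f g ->
  forall (G : Grp) (iota : X -> G), is_structure_group f g iota ->
  exists c : G, generalized_torsion c.
Proof.
move=> Hnt G iota [Hrel Huniv].
have [phi [Hphi Hphij]] := (Huniv (SD X) jj jj_rel).1.
have Hpe := phi_prodw Hphi Hphij.
have Heqprod : forall w w', size w = size w' -> (forall t, vv w t = vv w' t) ->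
    prodw iota w = prodw iota w'.
  by move=> w w' Hs Hv; apply: (@vv_eq_prod (size w)).
have Hsw : forall w w', prodw iota w = prodw iota w' -> sw w = sw w'.
  by move=> w w' H; move: (congr1 phi H); rewrite !Hpe => /(congr1 snd).
have Hvv : forall w w', prodw iota w = prodw iota w' -> forall t, vv w t = vv w' t.
  move=> w w' H t; move: (congr1 (fun p : sdT X => p.1 t) (congr1 phi H)).
  by rewrite !Hpe /= !ffunE => [[]].
have [x0 [y0 Hxy0]] : exists x0 y0, g x0 y0 != y0.
  case: (pickP (fun p : X * X => g p.1 p.2 != p.2)) => [[a b] /= H|H].
    by exists a, b.
  exfalso; apply: Hnt.
  have Hg : forall a b, g a b = b by move=> a b; move: (H (a, b)) => /= /negbFE /eqP.
  move=> a b; split; last exact: Hg.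
  by have := invol1 b a; rewrite Hg.
pose N := #|{perm X}|.
have [i [j [Hij Hsij]]] : exists i j, i < j /\ sw (pw y0 i) = sw (pw y0 j).
  pose F := fun k : 'I_N.+1 => sw (pw y0 k).
  case: (pickP (fun p : 'I_N.+1 * 'I_N.+1 => (p.1 < p.2) && (F p.1 == F p.2)))
    => [[a b] /= /andP [H1 /eqP H2]|H].
    by exists a, b.
  exfalso.
  have Hinj : injective F.
    move=> a b Hab; case: (ltngtP a b) => [Hlt|Hlt|/val_inj //].
      by move: (H (a, b)); rewrite /= Hlt Hab eqxx.
    by move: (H (b, a)); rewrite /= Hlt Hab eqxx.
  by have := @leq_card _ _ F Hinj; rewrite card_ord ltnn.
pose rho := sw (pw y0 i).
pose y' := (rho^-1)%g y0.
pose d := j - i.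
have Hd : 0 < d by rewrite subn_gt0.
pose W := pw y' d.
have HvW : forall t, vv W t = d * (t == y') by move=> t; exact: vv_pw.
have HswW : sw W = 1%g.
  have : prodw iota (pw y0 i ++ W) = prodw iota (pw y0 j).
    apply: Heqprod; first by rewrite size_cat !size_pw (subnKC (ltnW Hij)).
    move=> t; rewrite vv_cat HvW !vv_pw inv_eq /y' permKV -mulnDl (subnKC (ltnW Hij)).
    by [].
  move/Hsw; rewrite sw_cat -/rho => H.
  by rewrite -[sw W]mulg1 -(mulgV rho) mulgA H -Hsij.
have [x1 Hx1] : exists x1, sg x1 y' != y'.
  case: (pickP (fun x => sg x y' != y')) => [x1 H|H]; first by exists x1.
  exfalso.
  have Hfix : forall x, sg x y' = y' by move=> x; move: (H x) => /negbFE /eqP.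
  have := sw_fix Hfix (pw y0 i); rewrite -/rho /y' permKV => Hy0.
  by move: (Hfix x0); rewrite /y' -Hy0 sgE => H0; rewrite H0 eqxx in Hxy0.
have [m [Hm Hm0]] : exists m, (sg x1 ^+ m)%g = 1%g /\ 0 < m.
  by exists #[sg x1]%g; rewrite expg_order order_gt0.
have Hcomm : prodw iota (nseq m x1 ++ W) = prodw iota (W ++ nseq m x1).
  apply: Heqprod; first by rewrite !size_cat addnC.
  by move=> t; rewrite !vv_cat sw_nseq Hm HswW !invg1 !perm1 addnC.
pose U := prodw iota W.
pose xx := iota x1.
pose Pk k := prodw iota (nseq k x1).
have HP : forall k, Pk k.+1 = gmul (Pk k) xx.
  by move=> k; rewrite /Pk nseqSr prodw_cat /= gmul1r.
have HPm : gmul (Pk m) U = gmul U (Pk m) by rewrite /Pk /U -!prodw_cat.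
pose c := gmul (gmul (gmul U xx) (ginv U)) (ginv xx).
exists c; split.
  move=> Hc.
  have HUx : gmul U xx = gmul xx U.
    have : gmul (gmul c xx) U = gmul (gmul (gone G) xx) U by rewrite Hc.
    by rewrite /c !mulKV gmul1l.
  have : prodw iota (W ++ [:: x1]) = prodw iota (x1 :: W).
    rewrite prodw_cat /= gmul1r; exact: HUx.
  move/Hvv => /(_ y').
  rewrite vv_cat HswW invg1 perm1 /= !HvW eqxx (inv_eq (sg x1)) [y' == sg x1 y']eq_sym (negbTE Hx1).
  lia.
pose uu k := gmul (gmul (Pk k) U) (ginv (Pk k)).
have Hstep : forall k, gmul (gmul (Pk k) c) (ginv (Pk k)) = gmul (uu k) (ginv (uu k.+1)).
  move=> k; rewrite /uu HP /c !invM !invK !gmulA !mulKV.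
  by [].
have Htele : forall n k, conj_prod c (hl iota x1 k n) = gmul (uu k) (ginv (uu (k + n))).
  elim=> [|n IH] k.
    by rewrite addn0 gmulVr.
  have -> : hl iota x1 k n.+1 = Pk k :: hl iota x1 k.+1 n by [].
  rewrite conj_prod_cons IH Hstep addSnnS.
  by rewrite -gmulA (gmulA (ginv _)) gmulVl gmul1l.
exists (hl iota x1 0 m); split; first by case: (m) Hm0.
rewrite Htele add0n.
have -> : uu 0 = U.
  rewrite /uu /Pk /=.
  have -> : ginv (gone G) = gone G by apply: inv_uniq; rewrite gmul1l.
  by rewrite gmul1l gmul1r.
by rewrite /uu HPm mulKV' gmulVr.
Qed.
End Main.

Lemma pos_prod (G : Grp) (R : G -> G -> Prop) (c : G) :
  (forall a b d, R a b -> R b d -> R a d) ->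
  (forall a b d, R a b -> R (gmul d a) (gmul d b)) ->
  (forall a b d, R a b -> R (gmul a d) (gmul b d)) ->
  R (gone G) c -> forall hs, hs = [::] \/ R (gone G) (conj_prod c hs).
Proof.
move=> Htr Hl Hr Hc; elim=> [|h hs IH]; [by left | right].
have Hh : R (gone G) (gmul (gmul h c) (ginv h)).
  by have := Hr _ _ (ginv h) (Hl _ _ h Hc); rewrite gmul1r gmulVr.
rewrite conj_prod_cons; case: IH => [->|IH].
  by rewrite /= gmul1r.
apply: Htr Hh _.
by have := Hl _ _ (gmul (gmul h c) (ginv h)) IH; rewrite gmul1r.
Qed.

Lemma torsion_not_bo (G : Grp) (c : G) : generalized_torsion c -> ~ bi_orderable G.
Proof.
move=> [Hne [hs [Hhs Hcp]]] [lt [Hirr [Htr [Htot [Hl Hr]]]]].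
case: (Htot (gone G) c (nesym Hne)) => H.
  by case: (pos_prod Htr Hl Hr H hs) => [/Hhs|]//; rewrite Hcp; exact: Hirr.
have Htr' : forall a b d, lt b a -> lt d b -> lt d a by move=> a b d H1 H2; exact: Htr H2 H1.
case: (@pos_prod G (fun a b => lt b a) c Htr' (fun a b d => @Hl b a d) (fun a b d => @Hr b a d) H hs)
  => [/Hhs|] //; rewrite Hcp; exact: Hirr.
Qed.

Theorem theorem1 (X : finType) (f g : X -> X -> X) :
  sol_bijective f g ->
  non_degenerate f g ->
  symmetric_sol f g ->
  ~ trivial_sol f g ->
  forall (G : Grp) (iota : X -> G), is_structure_group f g iota ->
    ~ bi_orderable G /\ exists x : G, generalized_torsion x.
Proof.
move=> Hbij Hnd [Hinv Hbr] Hnt G iota Hstr.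
have Hginj : forall x, injective (g x) by move=> x; apply: bij_inj; exact: (Hnd x).2.
have [c Hc] := @torsion_exists X f g Hginj Hinv Hbr Hnt G iota Hstr.
by split; [exact: torsion_not_bo Hc | exists c].
Qed.
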